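(* Let $\Sigma=\{0,1\}$. For any $D,T\in\mathbb N_+$ there exists $\mathcal F\subseteq\Sigma^{\Sigma^*}$ such that $\mathrm{VCdim}(\mathcal F)=D$ but $\mathrm{VCdim}(\mathcal F^{\mathrm{e2e}(T)})=T\cdot D$ over the domain $\Sigma^n$ with $n=\lceil\log_2(DT)\rceil+1$.
   Context: For $f:\Sigma^*\to\Sigma$, $\bar f(\mathbf x)$ is $\mathbf x$ with $f(\mathbf x)$ appended; $f^{\mathrm{CoT}(T)}=\bar f^{\circ T}$; $f^{\mathrm{e2e}(T)}(\mathbf x)$ is the last token of $f^{\mathrm{CoT}(T)}(\mathbf x)$; $\mathcal F^{\mathrm{e2e}(T)}=\{f^{\mathrm{e2e}(T)}:f\in\mathcal F\}$. $\mathrm{VCdim}$ is the VC dimension ($\mathrm{VCdim}(\mathcal F)$ over the domain $\Sigma^*$; $\mathrm{VCdim}(\mathcal F^{\mathrm{e2e}(T)})$ of the restriction to $\Sigma^n$). *)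

(* Defs.v *)
From mathcomp Require Import all_boot.
Set Implicit Arguments. Unset Strict Implicit. Unset Printing Implicit Defensive.

Notation word := (seq bool).

Definition fbar (f : word -> bool) (x : word) : word := rcons x (f x).

Definition CoT (f : word -> bool) (T : nat) (x : word) : word := iter T (fbar f) x.

Definition e2e (f : word -> bool) (T : nat) (x : word) : bool :=
  last false (CoT f T x).

Definition e2e_class (F : (word -> bool) -> Prop) (T : nat) : (word -> bool) -> Prop :=
  fun g => exists f, F f /\ g = e2e f T.

Definition shatters {X : eqType} (H : (X -> bool) -> Prop) (dom : X -> Prop)
    (S : seq X) : Prop :=
  uniq S /\ (forall x, x \in S -> dom x) /\
  forall lab : X -> bool, exists h, H h /\ forall x, x \in S -> h x = lab x.

Definition VCdim_eq {X : eqType} (H : (X -> bool) -> Prop) (dom : X -> Prop)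
    (d : nat) : Prop :=
  (exists S, shatters H dom S /\ size S = d) /\
  (forall S, shatters H dom S -> size S <= d).

(* Main.v *)
Require Import Defs.
From mathcomp Require Import all_boot.
Set Implicit Arguments. Unset Strict Implicit. Unset Printing Implicit Defensive.

Definition nn (D T : nat) := (up_log 2 (D * T)).+1.
Definition LL (D T : nat) : seq word := [seq val x | x <- enum {: (nn D T).-tuple bool}].
Definition kk D T (w : word) := index (take (nn D T) w) (LL D T).
Definition fP D T (P : nat -> word) (w : word) : bool :=
  (kk D T w < D * T) &&
  prefix (rcons (take (kk D T w %% T) (drop (nn D T) w)) true) (P (kk D T w %/ T)).

Lemma size_LL D T : size (LL D T) = 2 ^ nn D T.
Proof. by rewrite size_map -cardE card_tuple card_bool. Qed.

Lemma uniq_LL D T : uniq (LL D T).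
Proof. rewrite map_inj_uniq ?enum_uniq //; exact: val_inj. Qed.

Lemma mem_LL D T x : size x = nn D T -> x \in LL D T.
Proof.
move=> Hx; have H : size x == nn D T by apply/eqP.
have -> : x = val (Tuple H) by [].
by apply: map_f; rewrite mem_enum.
Qed.

Lemma size_memLL D T x : x \in LL D T -> size x = nn D T.
Proof. by case/mapP => y _ ->; rewrite size_tuple. Qed.

Lemma DT_le D T : D * T <= 2 ^ nn D T.
Proof.
rewrite /nn expnS; apply: (leq_trans (up_logP (D * T) (isT : 1 < 2))).
by rewrite mul2n -addnn leq_addl.
Qed.

Lemma prefix_cmp (u1 u2 p : word) :
  prefix u1 p -> prefix u2 p -> prefix u1 u2 || prefix u2 u1.
Proof.
rewrite !prefixE => /eqP H1 /eqP H2.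
case: (leqP (size u1) (size u2)) => h.
  by apply/orP; left; rewrite -H2 take_takel // H1.
by apply/orP; right; rewrite -H1 take_takel ?H2 // ltnW.
Qed.

Lemma prefix_rcons_take (p : word) m :
  m < size p -> prefix (rcons (take m p) true) p = nth false p m.
Proof.
move=> Hm; rewrite prefixE size_rcons size_takel ?(ltnW Hm) //.
rewrite (take_nth false Hm) eqseq_rcons eqxx /=.
by case: (nth false p m).
Qed.

Lemma CoT_cat f T x : exists c, CoT f T x = x ++ c.
Proof.
elim: T => [|s [c IH]]; first by exists [::]; rewrite cats0.
by exists (rcons c (f (x ++ c))); rewrite /CoT iterS -/(CoT f s x) IH /fbar rcons_cat.
Qed.

Lemma e2e_S f T x : e2e f T.+1 x = f (CoT f T x).
Proof. by rewrite /e2e /CoT iterS /fbar last_rcons. Qed.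

Lemma kk_cat D T x c : size x = nn D T -> kk D T (x ++ c) = index x (LL D T).
Proof. by move=> Hx; rewrite /kk take_size_cat. Qed.

Lemma fP_cat_true D T P x c : size x = nn D T -> fP D T P (x ++ c) ->
  index x (LL D T) < D * T.
Proof. by move=> Hx; rewrite /fP kk_cat // => /andP[]. Qed.

Definition cs (p : word) t s := [seq nth false p (minn i t) | i <- iota 0 s].

Lemma fP_at D T P x s : size x = nn D T -> index x (LL D T) < D * T ->
  let k := index x (LL D T) in
  (k %% T) < size (P (k %/ T)) ->
  fP D T P (x ++ cs (P (k %/ T)) (k %% T) s) = nth false (P (k %/ T)) (minn s (k %% T)).
Proof.
move=> Hx Hk k Ht; rewrite /fP kk_cat // Hk /= drop_size_cat //.
set t := k %% T; set p := P (k %/ T).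
have -> : take t (cs p t s) = take (minn s t) p.
  rewrite /cs -map_take take_iota -(map_nth_iota0 false); last first.
    by rewrite geq_min (ltnW Ht) orbT.
  rewrite minnC; apply/eq_in_map => i; rewrite mem_iota add0n leq_min => /andP[_ /andP[_ hi]].
  by rewrite (minn_idPl (ltnW hi)).
rewrite prefix_rcons_take //.
by apply: leq_ltn_trans Ht; rewrite geq_min leqnn orbT.
Qed.

Lemma CoT_fP D T P x s : size x = nn D T -> index x (LL D T) < D * T ->
  let k := index x (LL D T) in
  (k %% T) < size (P (k %/ T)) ->
  CoT (fP D T P) s x = x ++ cs (P (k %/ T)) (k %% T) s.
Proof.
move=> Hx Hk k Ht; elim: s => [|s IH]; first by rewrite cats0.
rewrite /CoT iterS -/(CoT _ s x) IH /fbar fP_at //.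
by rewrite rcons_cat /cs -addn1 iotaD map_cat /= add0n cats1.
Qed.

Lemma fP_at' D T P x s k : size x = nn D T -> index x (LL D T) = k -> k < D * T ->
  k %% T < size (P (k %/ T)) ->
  fP D T P (x ++ cs (P (k %/ T)) (k %% T) s) = nth false (P (k %/ T)) (minn s (k %% T)).
Proof. by move=> Hx <-; apply: fP_at. Qed.

Lemma CoT_fP' D T P x s k : size x = nn D T -> index x (LL D T) = k -> k < D * T ->
  k %% T < size (P (k %/ T)) ->
  CoT (fP D T P) s x = x ++ cs (P (k %/ T)) (k %% T) s.
Proof. by move=> Hx <-; apply: CoT_fP. Qed.

Theorem theoremE1 (D T : nat) :
  0 < D -> 0 < T ->
  exists F : (word -> bool) -> Prop,
    VCdim_eq F (fun _ => True) D /\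
    VCdim_eq (e2e_class F T) (fun x => size x = (up_log 2 (D * T)).+1) (T * D).
Proof.
move=> D0 T0.
set L := LL D T.
have HDT := DT_le D T.
have HsL : D * T <= size L by rewrite /L size_LL.
have Lsz : forall k, k < size L -> size (nth [::] L k) = nn D T.
  by move=> k hk; apply: size_memLL; rewrite mem_nth.
have Lidx : forall k, k < size L -> index (nth [::] L k) L = k.
  by move=> k hk; rewrite index_uniq // uniq_LL.
exists (fun f => exists P, f = fP D T P); split.
- split.
  + exists [seq nth [::] L (j * T) | j <- iota 0 D]; split; last by rewrite size_map size_iota.
    have jlt : forall j, j \in iota 0 D -> j * T < size L.
      move=> j; rewrite mem_iota add0n => /= hj.
      by apply: leq_trans HsL; rewrite ltn_pmul2r.
    split; [|split] => //.
    * rewrite map_inj_in_uniq ?iota_uniq // => j1 j2 h1 h2 e.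
      have := congr1 (fun w => index w L) e; rewrite /= !Lidx ?jlt //.
      by move/eqP; rewrite eqn_pmul2r // => /eqP.
    * move=> lab; exists (fP D T (fun j => [:: lab (nth [::] L (j * T))])); split.
        by exists (fun j => [:: lab (nth [::] L (j * T))]).
      move=> w /mapP [j hj ->].
      have hk : index (nth [::] L (j * T)) L = j * T by rewrite Lidx ?jlt.
      have hj' := hj; rewrite mem_iota add0n /= in hj'.
      have := @fP_at' D T (fun j => [:: lab (nth [::] L (j * T))]) (nth [::] L (j * T)) 0 _
        (Lsz _ (jlt _ hj)) hk.
      rewrite cats0 modnMl mulnK // ltn_pmul2r // hj' => /(_ isT isT) ->.
      by rewrite min0n.
  + move=> S [uS [_ shS]].
    have Hk : forall w, w \in S -> kk D T w < D * T.
      move=> w hw; have [h [[P ->] hh]] := shS (fun _ => true).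
      by move: (hh w hw); rewrite /fP => /andP[].
    pose jw w := kk D T w %/ T.
    pose u w := rcons (take (kk D T w %% T) (drop (nn D T) w)) true.
    have claim : forall a b, a \in S -> b \in S -> jw a = jw b ->
        prefix (u a) (u b) -> a = b.
      move=> a b ha hb eab pab; apply/eqP; apply/negPn/negP => nab.
      have [h [[P ->] hh]] := shS (fun w => w == b).
      have := hh a ha; have := hh b hb; rewrite eqxx (negbTE nab) /fP.
      case/andP => _ pb; rewrite Hk //=.
      by rewrite /jw in eab; rewrite eab (prefix_trans pab pb).
    rewrite -(size_map jw) -(size_iota 0 D); apply: uniq_leq_size.
      rewrite map_inj_in_uniq // => a b ha hb e.
      have [h [[P ->] hh]] := shS (fun _ => true).
      have := hh a ha; have := hh b hb; rewrite /fP => /andP[_ pb] /andP[_ pa].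
      rewrite /jw in e; rewrite -e in pb.
      by case/orP: (prefix_cmp pa pb) => hp; [apply: claim | symmetry; apply: claim].
    move=> j /mapP [w hw ->]; rewrite mem_iota add0n /= /jw ltn_divLR //.
    exact: Hk.
- have HL : L = LL D T by [].
  case: T T0 L HL HDT HsL Lsz Lidx => // T' _ L HL HDT HsL Lsz Lidx; subst L; set L := LL D T'.+1.
  have ltL : forall k, k \in iota 0 (D * T'.+1) -> k < size L.
    by move=> k; rewrite mem_iota add0n /= => hk; apply: leq_trans HsL.
  split.
  + exists [seq nth [::] L k | k <- iota 0 (D * T'.+1)].
    split; last by rewrite size_map size_iota mulnC.
    split; [|split].
    * by rewrite map_inj_in_uniq ?iota_uniq // => a b ha hb /(congr1 (fun w => index w L));
        rewrite /= !Lidx ?ltL.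
    * by move=> x /mapP [k hk ->]; apply: Lsz; apply: ltL.
    * move=> lab.
      pose P := fun j => mkseq (fun t => lab (nth [::] L (j * T'.+1 + t))) T'.+1.
      exists (e2e (fP D T'.+1 P) T'.+1); split; first by exists (fP D T'.+1 P); split => //; exists P.
      move=> x /mapP [k hk ->].
      have hk' := hk; rewrite mem_iota add0n /= in hk'.
      have Hx := Lsz _ (ltL _ hk).
      have Hi : index (nth [::] L k) L = k by rewrite Lidx ?ltL.
      have Ht : k %% T'.+1 < size (P (k %/ T'.+1)).
        by rewrite size_mkseq ltn_pmod.
      rewrite e2e_S (CoT_fP' T' Hx Hi hk' Ht) (fP_at' T' Hx Hi hk' Ht).
      rewrite (minn_idPr _); last by rewrite -ltnS ltn_pmod.
      by rewrite nth_mkseq ?ltn_pmod // -divn_eq.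
  + move=> S [uS [dS shS]].
    rewrite mulnC -(size_iota 0 (D * T'.+1)) -(size_map (nth [::] L)).
    apply: uniq_leq_size => // x hx.
    have Hx : size x = nn D T'.+1 by exact: dS.
    have [g [[f [[P ->] ->]] hh]] := shS (fun _ => true).
    have := hh x hx; rewrite e2e_S; have [c ->] := CoT_cat (fP D T'.+1 P) T' x.
    move/(fP_cat_true Hx) => hi.
    rewrite -(nth_index [::] (mem_LL Hx)); apply: map_f.
    by rewrite mem_iota add0n.
Qed.
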